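(* Let $G$ be a finite group whose prime graph $\Pi(G)$ has no edges, i.e. $G$ contains no element whose order is a product of two distinct primes. Then $P(G)$ is a cograph.
   Context: The prime graph (Gruenberg--Kegel graph) $\Pi(G)$ of a finite group $G$ has as vertices the prime divisors of $|G|$, with distinct primes $p,q$ adjacent if and only if $G$ contains an element of order $pq$. The power graph $P(G)$ has vertex set $G$, with distinct $u,v$ adjacent if and only if $u=v^i$ or $v=u^j$ for some integers $i,j$. A cograph is a graph with no induced subgraph isomorphic to the path $P_4$ on four vertices. *)

(* Defs.v *)
From mathcomp Require Import all_boot all_fingroup.
Set Implicit Arguments. Unset Strict Implicit. Unset Printing Implicit Defensive.
Local Open Scope group_scope.

Definition prime_graph_edgeless (gT : finGroupType) (G : {group gT}) : Prop :=
  forall (x : gT) (p q : nat), x \in G -> prime p -> prime q -> p != q ->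
    #[x] <> (p * q)%N.

(* Power graph adjacency (on vertex set G): u, v distinct and one is a power
   of the other.  In a finite group, "u = v^i for some integer i" is exactly
   u \in <[v]>. *)
Definition pow_adj (gT : finGroupType) (u v : gT) : bool :=
  (u != v) && ((u \in <[v]>) || (v \in <[u]>)).

Definition is_cograph (T : finType) (A : {set T}) (e : rel T) : Prop :=
  ~ exists a b c d : T,
      [/\ [/\ a \in A, b \in A, c \in A & d \in A],
          uniq [:: a; b; c; d],
          [/\ e a b, e b c & e c d] &
          [/\ ~~ e a c, ~~ e b d & ~~ e a d]].

Definition power_graph_is_cograph (gT : finGroupType) (G : {group gT}) : Prop :=
  is_cograph G (@pow_adj gT).

(* Main.v *)
Require Import Defs.
From mathcomp Require Import all_boot all_fingroup.
From mathcomp Require Import cyclic.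

Local Open Scope group_scope.

Lemma order_ppow (gT : finGroupType) (G : {group gT}) (c : gT) :
  prime_graph_edgeless G -> c \in G ->
  forall d1 d2, d1 %| #[c] -> d2 %| #[c] -> (d1 %| d2) || (d2 %| d1).
Proof.
move=> HG cG d1 d2 h1 h2.
set n := #[c] in h1 h2.
have n0 : 0 < n by rewrite /n order_gt0.
have [n1|n1] := leqP n 1.
  have n1' : n = 1%N by apply/eqP; rewrite eqn_leq n1 n0.
  by move: h1; rewrite n1' dvdn1 => /eqP ->; rewrite dvd1n.
set p := pdiv n.
have pp : prime p by apply: pdiv_prime.
have pn : p.-nat n.
  apply/pnatP => // q qp qn; rewrite inE; apply/negPn/negP => qnp.
  have cop : coprime p q by rewrite prime_coprime // dvdn_prime2 // eq_sym.
  have pqn : p * q %| n by rewrite Gauss_dvd // qn pdiv_dvd.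
  have dd : n %/ (p * q) %| n by apply: dvdn_div.
  apply: (HG (c ^+ (n %/ (p * q))) p q) => //.
  - by rewrite groupX.
  - by rewrite eq_sym.
  - rewrite orderXdiv // -/n divnA // mulKn //.
have [k nk] := p_natP pn.
rewrite nk in h1 h2.
case/(dvdn_pfactor _ _ pp): h1 => m1 _ ->.
case/(dvdn_pfactor _ _ pp): h2 => m2 _ ->.
rewrite !dvdn_Pexp2l ?prime_gt1 //; exact: leq_total.
Qed.

Lemma chain (gT : finGroupType) (G : {group gT}) (c x y : gT) :
  prime_graph_edgeless G -> c \in G -> x \in <[c]> -> y \in <[c]> ->
  (x \in <[y]>) || (y \in <[x]>).
Proof.
move=> HG cG xc yc.
have sx : <[x]> \subset <[c]> by rewrite cycle_subG.
have sy : <[y]> \subset <[c]> by rewrite cycle_subG.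
have := @order_ppow _ _ c HG cG _ _ (cardSg sx) (cardSg sy).
rewrite !(cardSg_cyclic (cycle_cyclic c)) // !cycle_subG.
by [].
Qed.

Lemma cyc_trans {gT : finGroupType} {x y z : gT} :
  x \in <[y]> -> y \in <[z]> -> x \in <[z]>.
Proof. by move=> h1; rewrite -cycle_subG => /subsetP; apply. Qed.

Theorem mainTheorem6 (gT : finGroupType) (G : {group gT}) :
  prime_graph_edgeless G -> power_graph_is_cograph G.
Proof.
move=> HG [a [b [c [d [[aG bG cG dG] U [eab ebc ecd] [nac nbd nad]]]]]].
move: U; rewrite /= !inE !negb_or => /and4P [/and3P[nab nac' nad'] /andP[nbc nbd'] ncd _].
move: eab ebc ecd nac nbd nad; rewrite /pow_adj nab nbc ncd nac' nbd' nad' /= !negb_or.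
move=> eab ebc ecd /andP[ac ca] /andP[bd db] _.
case/orP: ebc => [bc|cb].
- case/orP: ecd => [cd|dc].
  + by move: (cyc_trans bc cd); rewrite (negbTE bd).
  + by have := @chain _ _ c b d HG cG bc dc; rewrite (negbTE bd) (negbTE db).
- case/orP: eab => [ab|ba].
  + by have := @chain _ _ b a c HG bG ab cb; rewrite (negbTE ac) (negbTE ca).
  + by move: (cyc_trans cb ba); rewrite (negbTE ca).
Qed.
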